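(* Let $(x_j)_{j=1}^\infty$ be a Riesz basis for a real infinite dimensional Hilbert space $H$, and let $x\in H$. Then $(x_j)_{j=1}^\infty$ does stable phase retrieval near $x$ if and only if $\langle x,x_j\rangle=0$ for all but finitely many $j\in\mathbb N$.
   Context: The analysis operator of $(x_j)_{j=1}^\infty$ is $\Theta(x)=(\langle x,x_j\rangle)_{j=1}^\infty\in\ell_2$ and $|\Theta x|=(|\langle x,x_j\rangle|)_j$. For $x,y$ with $x\neq\pm y$, set $\Psi(x,y)=\||\Theta x|-|\Theta y|\|/\min_{\lambda=\pm1}\|x-\lambda y\|$. For $C>0$, the family does $C$-stable phase retrieval near $x$ if $\liminf_{y\to x,\ y\neq\pm x} C\,\Psi(x,y)\ge1$, and does stable phase retrieval near $x$ if this holds for some $C>0$. *)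

(* Defs.v *)
From HB Require Import structures.
From mathcomp Require Import all_boot all_order all_algebra.
From mathcomp Require Import all_classical all_reals all_analysis.
Set Implicit Arguments. Unset Strict Implicit. Unset Printing Implicit Defensive.
Import Order.TTheory GRing.Theory Num.Theory.
Import numFieldNormedType.Exports.
Local Open Scope ring_scope.

Section Defs.
Variable R : realType.
Variable H : normedModType R.

Definition is_inner_product (ip : H -> H -> R) : Prop :=
  [/\ forall (a : R) (x y z : H), ip (a *: x + y) z = a * ip x z + ip y z,
      forall x y : H, ip x y = ip y x
    & forall x : H, ip x x = `|x| ^+ 2].

Definition infinite_dimensional : Prop :=
  forall n : nat, exists v : 'I_n -> H,
    forall c : 'I_n -> R, \sum_(i < n) c i *: v i = 0 -> forall i, c i = 0.

Definition riesz_basis (xs : nat -> H) : Prop :=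
  (forall (y : H) (e : R), 0 < e ->
     exists (n : nat) (c : nat -> R), `|y - \sum_(j < n) c j *: xs j| < e) /\
  exists A B : R, [/\ 0 < A, 0 < B &
    forall (n : nat) (c : nat -> R),
      A * \sum_(j < n) c j ^+ 2 <= `|\sum_(j < n) c j *: xs j| ^+ 2
      /\ `|\sum_(j < n) c j *: xs j| ^+ 2 <= B * \sum_(j < n) c j ^+ 2].

Definition abs_analysis_dist (ip : H -> H -> R) (xs : nat -> H) (x y : H) : R :=
  Num.sqrt (limn (fun n => \sum_(j < n) (`|ip x (xs j)| - `|ip y (xs j)|) ^+ 2)).

Definition Psi (ip : H -> H -> R) (xs : nat -> H) (x y : H) : R :=
  abs_analysis_dist ip xs x y / Num.min `|x - y| `|x + y|.

(* liminf_{y -> x, y <> +-x} C * Psi(x,y) >= 1, written out *)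
Definition C_stable_pr_near (ip : H -> H -> R) (xs : nat -> H) (C : R) (x : H) : Prop :=
  forall e : R, 0 < e -> exists d : R, 0 < d /\
    forall y : H, `|y - x| < d -> y <> x -> y <> - x -> 1 - e <= C * Psi ip xs x y.

Definition stable_pr_near (ip : H -> H -> R) (xs : nat -> H) (x : H) : Prop :=
  exists C : R, 0 < C /\ C_stable_pr_near ip xs C x.

End Defs.

(* Main.v *)
Require Import Defs.
From HB Require Import structures.
From mathcomp Require Import all_boot all_order all_algebra.
From mathcomp Require Import all_classical all_reals all_analysis.
From mathcomp Require Import lra ring.
Import Order.TTheory GRing.Theory Num.Theory.
Import numFieldNormedType.Exports.
Set Implicit Arguments. Unset Strict Implicit.
Local Open Scope ring_scope.

Lemma ip0l (R : realType) (H : normedModType R) (ip : H -> H -> R)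
  (hip : is_inner_product ip) (z : H) : ip 0 z = 0.
Proof.
case: hip => hl _ _; have := hl 1 0 0 z; rewrite scaler0 addr0 mul1r.
move=> h; lra.
Qed.

Lemma ipDl (R : realType) (H : normedModType R) (ip : H -> H -> R)
  (hip : is_inner_product ip) (x y z : H) : ip (x + y) z = ip x z + ip y z.
Proof. by case: hip => hl _ _; have := hl 1 x y z; rewrite scale1r mul1r. Qed.

Lemma ipZl (R : realType) (H : normedModType R) (ip : H -> H -> R)
  (hip : is_inner_product ip) a (x z : H) : ip (a *: x) z = a * ip x z.
Proof.
have h0 := ip0l hip z.
by case: hip => hl _ _; have := hl a x 0 z; rewrite addr0 h0 addr0.
Qed.

Lemma ipNl (R : realType) (H : normedModType R) (ip : H -> H -> R)
  (hip : is_inner_product ip) (x z : H) : ip (- x) z = - ip x z.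
Proof. by rewrite -scaleN1r (ipZl hip) mulN1r. Qed.

Lemma ipBl (R : realType) (H : normedModType R) (ip : H -> H -> R)
  (hip : is_inner_product ip) (x y z : H) : ip (x - y) z = ip x z - ip y z.
Proof. by rewrite (ipDl hip) (ipNl hip). Qed.

Lemma ipC (R : realType) (H : normedModType R) (ip : H -> H -> R)
  (hip : is_inner_product ip) (x y : H) : ip x y = ip y x.
Proof. by case: hip. Qed.

Lemma ipDr (R : realType) (H : normedModType R) (ip : H -> H -> R)
  (hip : is_inner_product ip) (x y z : H) : ip z (x + y) = ip z x + ip z y.
Proof. by rewrite !(ipC hip z) (ipDl hip). Qed.

Lemma ipZr (R : realType) (H : normedModType R) (ip : H -> H -> R)
  (hip : is_inner_product ip) a (x z : H) : ip z (a *: x) = a * ip z x.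
Proof. by rewrite !(ipC hip z) (ipZl hip). Qed.

Lemma ipBr (R : realType) (H : normedModType R) (ip : H -> H -> R)
  (hip : is_inner_product ip) (x y z : H) : ip z (x - y) = ip z x - ip z y.
Proof. by rewrite !(ipC hip z) (ipBl hip). Qed.

Lemma ipn (R : realType) (H : normedModType R) (ip : H -> H -> R)
  (hip : is_inner_product ip) (x : H) : ip x x = `|x| ^+ 2.
Proof. by case: hip. Qed.

Lemma ip_sumr (R : realType) (H : normedModType R) (ip : H -> H -> R)
  (hip : is_inner_product ip) (z : H) (xs : nat -> H) (c : nat -> R) n :
  ip z (\sum_(j < n) c j *: xs j) = \sum_(j < n) c j * ip z (xs j).
Proof.
elim: n => [|n IH]; first by rewrite !big_ord0 (ipC hip) (ip0l hip).
by rewrite !big_ord_recr /= (ipDr hip) IH (ipZr hip).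
Qed.

Lemma normB2 (R : realType) (H : normedModType R) (ip : H -> H -> R)
  (hip : is_inner_product ip) (x y : H) :
  `|x - y| ^+ 2 = `|x| ^+ 2 - 2 * ip x y + `|y| ^+ 2.
Proof.
rewrite -!(ipn hip) (ipBl hip) !(ipBr hip) (ipC hip y x); lra.
Qed.

Lemma bessel (R : realType) (H : normedModType R) (ip : H -> H -> R)
  (hip : is_inner_product ip) (xs : nat -> H) (B : R) (hB : 0 < B)
  (hup : forall n (c : nat -> R), `|\sum_(j < n) c j *: xs j| ^+ 2 <= B * \sum_(j < n) c j ^+ 2)
  (z : H) n : \sum_(j < n) ip z (xs j) ^+ 2 <= B * `|z| ^+ 2.
Proof.
set T := \sum_(j < n) _.
set u := \sum_(j < n) ip z (xs j) *: xs j.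
have hzu : ip z u = T by rewrite /u (ip_sumr hip z xs (fun j => ip z (xs j))); apply: eq_bigr => j _; rewrite expr2.
have h1 := normB2 hip (B *: z) u.
rewrite normrZ (ipZl hip) hzu (gtr0_norm hB) in h1.
have h2 : `|u| ^+ 2 <= B * T by exact: (hup n (fun j => ip z (xs j))).
have h3 : 0 <= `|B *: z - u| ^+ 2 by apply: sqr_ge0.
have h4 : B * T <= B * (B * `|z| ^+ 2) by nra.
by rewrite ler_pM2l in h4.
Qed.

Lemma lower_frame (R : realType) (H : normedModType R) (ip : H -> H -> R)
  (hip : is_inner_product ip) (xs : nat -> H) (A B : R) (hA : 0 < A) (hB : 0 < B)
  (hup : forall n (c : nat -> R), `|\sum_(j < n) c j *: xs j| ^+ 2 <= B * \sum_(j < n) c j ^+ 2)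
  (hlow : forall n (c : nat -> R), A * \sum_(j < n) c j ^+ 2 <= `|\sum_(j < n) c j *: xs j| ^+ 2)
  (hden : forall (y : H) (e : R), 0 < e ->
     exists (n : nat) (c : nat -> R), `|y - \sum_(j < n) c j *: xs j| < e)
  (z : H) : A * `|z| ^+ 2 <= limn (fun n => \sum_(j < n) ip z (xs j) ^+ 2).
Proof.
set S := fun n => _.
have hS : S = series (fun j => ip z (xs j) ^+ 2).
  by apply: funext => n; rewrite /S /series /= big_mkord.
have hnd : {homo S : n m / (n <= m)%N >-> n <= m}.
  by rewrite hS; apply: nondecreasing_series => k _ _; apply: sqr_ge0.
have hcv : cvgn S.
  apply: nondecreasing_is_cvgn => //; exists (B * `|z| ^+ 2) => _ [n _ <-].
  exact: (bessel hip hB hup).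
apply/ler_addgt0Pr => e he.
have hA1 : 0 < A + 1 by lra.
set eps := Num.min 1 (e / (A + 1)).
have heps : 0 < eps by rewrite lt_min ltr01 divr_gt0.
have [n [c hc]] := hden z eps heps.
apply: le_trans (lerD (nondecreasing_cvgn_le hnd hcv n) (lexx e)).
set u := \sum_(j < n) c j *: xs j.
set T := \sum_(j < n) c j ^+ 2.
set P := \sum_(j < n) c j * ip z (xs j).
have hzu : ip z u = P by rewrite /u (ip_sumr hip).
have h1 := normB2 hip z u; rewrite hzu in h1.
have h2 : A * T <= `|u| ^+ 2 by apply: hlow.
have h3 : 2 * A * P <= A ^+ 2 * T + S n.
  rewrite /P /T /S mulr_sumr mulr_sumr -big_split /=; apply: ler_sum => j _.
  have := sqr_ge0 (A * c j - ip z (xs j)); nra.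
have h4 : A * `|z - u| ^+ 2 <= e.
  have hzu0 : 0 <= `|z - u| by [].
  have hle1 : `|z - u| <= 1 by apply: ltW; apply: lt_le_trans hc _; rewrite ge_min lexx.
  have hle2 : `|z - u| <= e / (A + 1) by apply: ltW; apply: lt_le_trans hc _; rewrite ge_min lexx orbT.
  have : `|z - u| * (A + 1) <= e by rewrite -ler_pdivlMr.
  nra.
nra.
Qed.

Lemma cauchy_schwarz (R : realType) (H : normedModType R) (ip : H -> H -> R)
  (hip : is_inner_product ip) (u v : H) : `|ip u v| <= `|u| * `|v|.
Proof.
have key : 0 <= `|u| ^+ 2 * (`|u| ^+ 2 * `|v| ^+ 2 - ip u v ^+ 2).
  have := normB2 hip (`|u| ^+ 2 *: v) (ip u v *: u).
  rewrite !normrZ (ipZl hip) (ipZr hip) (ipC hip v u) !exprMn (real_normK (num_real (ip u v))).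
  rewrite normr_id.
  set w := (X in `|X| ^+ 2 = _).
  move=> h2; have := sqr_ge0 `|w|; rewrite h2; nra.
have h2 : ip u v ^+ 2 <= (`|u| * `|v|) ^+ 2.
  have [u0|upos] := eqVneq `|u| 0.
    move/eqP: u0; rewrite normr_eq0 => /eqP ->; rewrite (ip0l hip) expr0n /= normr0 mul0r expr0n /=.
    by [].
  have hu : 0 < `|u| ^+ 2 by rewrite exprn_gt0 // lt_def upos normr_ge0.
  rewrite exprMn; nra.
rewrite -(sqrtr_sqr (ip u v)) -[X in _ <= X](ger0_norm (x := `|u| * `|v|)) ?mulr_ge0 //.
by rewrite -sqrtr_sqr ler_sqrt // sqr_ge0.
Qed.

Lemma sign_lemma (R : realType) (a b : R) : `|a - b| < `|a| ->
  (`|a| - `|b|) ^+ 2 = (a - b) ^+ 2.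
Proof.
case: (lerP 0 a) => ha; case: (lerP 0 b) => hb;
  rewrite ?(ger0_norm ha) ?(ltr0_norm ha) ?(ger0_norm hb) ?(ltr0_norm hb);
  case: (lerP 0 (a - b)) => hab; rewrite ?(ger0_norm hab) ?(ltr0_norm hab); nra.
Qed.

Lemma finite_min (R : realType) (f : nat -> R) N :
  exists d : R, 0 < d /\ forall j, (j < N)%N -> f j != 0 -> d <= `|f j|.
Proof.
elim: N => [|N [d [hd IH]]]; first by exists 1; split => // j.
have [fN0|fN] := eqVneq (f N) 0.
  exists d; split => // j; rewrite ltnS leq_eqVlt => /orP [/eqP -> |]; first by rewrite fN0 eqxx.
  exact: IH.
exists (Num.min d `|f N|); split; first by rewrite lt_min hd normr_gt0 fN.
move=> j; rewrite ltnS leq_eqVlt => /orP [/eqP -> _|hj hf]; first by rewrite ge_min lexx orbT.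
by rewrite ge_min IH.
Qed.

Lemma backward (R : realType) (H : normedModType R)
  (ip : H -> H -> R) (hip : is_inner_product ip)
  (xs : nat -> H) (hxs : riesz_basis xs) (x : H) :
  (exists N : nat, forall j : nat, (N <= j)%N -> ip x (xs j) = 0) ->
  stable_pr_near ip xs x.
Proof.
case: hxs => hden [A [B [hA hB hAB]]] [N hN].
have hup n c := (hAB n c).2.
have hlow n c := (hAB n c).1.
have sA0 : 0 < Num.sqrt A by rewrite sqrtr_gt0.
exists (1 / Num.sqrt A); split; first by rewrite divr_gt0.
move=> e he.
have [d [hd hdj]] := finite_min (fun j => ip x (xs j) / (`|xs j| + 1)) N.
exists d; split => // y hy hyx hyNx.
have hxy : `|x - y| < d by rewrite distrC.
have hterm : forall j, (`|ip x (xs j)| - `|ip y (xs j)|) ^+ 2 = ip (x - y) (xs j) ^+ 2.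
  move=> j; rewrite (ipBl hip).
  have [a0|anz] := eqVneq (ip x (xs j)) 0.
    by rewrite a0 normr0 sub0r add0r !sqrrN real_normK ?num_real.
  apply: sign_lemma.
  have hj : (j < N)%N.
    case: (ltnP j N) => // hj; by rewrite hN // eqxx in anz.
  have hx1 : 0 < `|xs j| + 1 by rewrite ltr_pwDr.
  have hnz : ip x (xs j) / (`|xs j| + 1) != 0.
    by apply: mulf_neq0 => //; rewrite invr_eq0 gt_eqF.
  have := hdj j hj hnz.
  rewrite normrM normfV (gtr0_norm hx1) ler_pdivlMr // => hd2.
  have hcs := cauchy_schwarz hip (x - y) (xs j); rewrite (ipBl hip) in hcs.
  have h0 : 0 <= `|xs j| by [].
  have : `|x - y| * (`|xs j| + 1) < d * (`|xs j| + 1) by rewrite ltr_pM2r.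
  nra.
rewrite /Psi /abs_analysis_dist.
have -> : (fun n => \sum_(j < n) (`|ip x (xs j)| - `|ip y (xs j)|) ^+ 2) =
  (fun n => \sum_(j < n) ip (x - y) (xs j) ^+ 2).
  by apply: funext => n; apply: eq_bigr => j _; exact: hterm.
have hlf := lower_frame hip hA hB hup hlow hden (x - y).
set L := limn _ in hlf *.
set m := Num.min _ _.
have hxy0 : 0 < `|x - y|.
  by rewrite normr_gt0 subr_eq0; apply/eqP => h; apply: hyx; rewrite h.
have hxy1 : 0 < `|x + y|.
  rewrite normr_gt0; apply/eqP => h; apply: hyNx; apply/eqP.
  by rewrite -addr_eq0 addrC h.
have hm : 0 < m by rewrite lt_min hxy0 hxy1.
have hmle : m <= `|x - y| by rewrite ge_min lexx.
have hL0 : 0 <= L by apply: le_trans hlf; rewrite mulr_ge0 ?sqr_ge0 ?ltW.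
have hsL : Num.sqrt A * `|x - y| <= Num.sqrt L.
  have -> : Num.sqrt A * `|x - y| = Num.sqrt (A * `|x - y| ^+ 2).
    by rewrite sqrtrM ?(ltW hA) // sqrtr_sqr normr_id.
  by rewrite ler_sqrt.
have h1 : Num.sqrt A * m <= Num.sqrt L.
  apply: le_trans hsL; rewrite ler_pM2l //.
have hsA : Num.sqrt A != 0 by rewrite gt_eqF.
have hm0 : m != 0 by rewrite gt_eqF.
have -> : 1 / Num.sqrt A * (Num.sqrt L / m) = Num.sqrt L / (Num.sqrt A * m).
  by field; rewrite hsA hm0.
have : 1 <= Num.sqrt L / (Num.sqrt A * m).
  by rewrite ler_pdivlMr ?mulr_gt0 // mul1r.
lra.
Qed.

Lemma pad_sum (R : realType) (H : normedModType R) (xs : nat -> H) (c : nat -> R) n p :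
  \sum_(j < n + p) (if (j < n)%N then c j else 0) *: xs j = \sum_(j < n) c j *: xs j.
Proof.
elim: p => [|p IH].
  rewrite addn0; apply: eq_bigr => j _; by rewrite ltn_ord.
by rewrite addnS big_ord_recr /= IH ltnNge leq_addr /= scale0r addr0.
Qed.

Lemma ind_sum (R : realType) (H : normedModType R) (xs : nat -> H) k N :
  (k < N)%N -> \sum_(j < N) ((if (j : nat) == k then 1 else 0) : R) *: xs j = xs k.
Proof.
move=> hk; rewrite (bigD1 (Ordinal hk)) //= eqxx scale1r big1 ?addr0 // => i hi.
rewrite ifF ?scale0r //; apply/negP => /eqP hik; move/negP: hi; apply.
by apply/eqP/val_inj.
Qed.

Definition Dk (R : realType) (H : normedModType R) (xs : nat -> H) (k : nat) (u : H) : Prop :=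
  exists n (c : nat -> R), c k = 0 /\ u = \sum_(j < n) c j *: xs j.

Lemma Dk_lin (R : realType) (H : normedModType R) (xs : nat -> H) k (u v : H) (a b : R) :
  Dk xs k u -> Dk xs k v -> Dk xs k (a *: u + b *: v).
Proof.
move=> [n [c [hc ->]]] [m [c' [hc' ->]]].
exists (n + m)%N, (fun j => a * (if (j < n)%N then c j else 0) + b * (if (j < m)%N then c' j else 0)).
split; first by rewrite hc hc'; case: ifP; case: ifP => _ _; rewrite ?mulr0 ?addr0.
rewrite -(pad_sum xs c n m) -(pad_sum xs c' m n) [(m + n)%N]addnC !scaler_sumr -big_split /=.
by apply: eq_bigr => j _; rewrite scalerDl !scalerA.
Qed.

Lemma Dk0 (R : realType) (H : normedModType R) (xs : nat -> H) k : Dk xs k 0.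
Proof. by exists 0%N, (fun _ => 0 : R); rewrite big_ord0. Qed.

Lemma Dkx (R : realType) (H : normedModType R) (xs : nat -> H) k j : j != k -> Dk xs k (xs j).
Proof.
move=> hjk; exists j.+1, (fun i => if i == j then 1 else 0 : R).
by rewrite eq_sym (negbTE hjk) ind_sum.
Qed.

Lemma Dk_low (R : realType) (H : normedModType R) (xs : nat -> H) (A : R)
  (hlow : forall n (c : nat -> R), A * \sum_(j < n) c j ^+ 2 <= `|\sum_(j < n) c j *: xs j| ^+ 2)
  (hA : 0 < A) k u : Dk xs k u -> A <= `|xs k - u| ^+ 2.
Proof.
move=> [n [c [hc ->]]].
set c' := fun j => ((if j == k then 1 else 0) : R) - (if (j < n)%N then c j else 0).
have hk : (k < n + k.+1)%N by rewrite addnS ltnS leq_addl.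
have -> : xs k - \sum_(j < n) c j *: xs j = \sum_(j < n + k.+1) c' j *: xs j.
  rewrite -(ind_sum xs hk) -(pad_sum xs c n k.+1) -sumrB.
  by apply: eq_bigr => j _; rewrite scalerBl.
apply: le_trans (hlow _ c').
rewrite (bigD1 (Ordinal hk)) //= /c' eqxx.
have -> : ((if (k < n)%N then c k else 0) = 0) by case: ifP.
rewrite subr0 expr1n.
have : 0 <= \sum_(i < n + k.+1 | i != Ordinal hk) c' i ^+ 2 by apply: sumr_ge0 => i _; apply: sqr_ge0.
nra.
Qed.

Lemma RL1 (R : realType) (H : normedModType R) (ip : H -> H -> R)
  (hip : is_inner_product ip) (w v : H) :
  (forall s : R, `|w| ^+ 2 <= `|w - s *: v| ^+ 2) -> ip w v = 0.
Proof.
move=> P.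
set t := ip w v; set V := `|v| ^+ 2.
have hV : 0 <= V by apply: sqr_ge0.
have hV1 : 0 < V + 1 by lra.
set q := t / (V + 1).
have hq : q * (V + 1) = t by rewrite /q divfK // gt_eqF.
have := P q; rewrite (normB2 hip) (ipZr hip) normrZ exprMn (real_normK (num_real q)) -/t -/V => h.
have h2 : q ^+ 2 * (V + 2) <= 0 by nra.
have h3 : q ^+ 2 = 0 by apply/eqP; rewrite eq_le sqr_ge0 andbT; nra.
have : q = 0 by move/eqP: h3; rewrite sqrf_eq0 => /eqP.
by move=> q0; rewrite -hq q0 mul0r.
Qed.

Lemma RL2 (R : realType) (d t : R) : 0 <= t ->
  (forall eta, 0 < eta -> d <= (t + eta) ^+ 2) -> d <= t ^+ 2.
Proof.
move=> ht P; apply/ler_addgt0Pr => e he.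
have h1 : 0 < 2 * t + 1 by lra.
set eta := Num.min 1 (e / (2 * t + 1)).
have heta : 0 < eta by rewrite lt_min ltr01 divr_gt0.
have he1 : eta <= 1 by rewrite ge_min lexx.
have he2 : eta * (2 * t + 1) <= e by rewrite -ler_pdivlMr // ge_min lexx orbT.
have := P eta heta; nra.
Qed.

Lemma RL3 (R : realType) (d t : R) : 0 <= t -> 0 <= d ->
  (forall eta, 0 < eta -> exists a, [/\ 0 <= a, t <= a + eta & a ^+ 2 <= d + eta]) ->
  t ^+ 2 <= d.
Proof.
move=> ht hd P; apply/ler_addgt0Pr => e he.
have h1 : 0 < 2 * d + 6 by lra.
set eta := Num.min 1 (e / (2 * d + 6)).
have heta : 0 < eta by rewrite lt_min ltr01 divr_gt0.
have he1 : eta <= 1 by rewrite ge_min lexx.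
have he2 : eta * (2 * d + 6) <= e by rewrite -ler_pdivlMr // ge_min lexx orbT.
have [a [ha1 ha2 ha3]] := P eta heta.
have ha4 : a <= d + 2 by nra.
have : t ^+ 2 <= (a + eta) ^+ 2 by nra.
nra.
Qed.

Lemma normD2 (R : realType) (H : normedModType R) (ip : H -> H -> R)
  (hip : is_inner_product ip) (x y : H) :
  `|x + y| ^+ 2 = `|x| ^+ 2 + 2 * ip x y + `|y| ^+ 2.
Proof.
have := normB2 hip x (- y); rewrite opprK normrN (ipC hip x (- y)) (ipNl hip) (ipC hip y x).
move=> ->; lra.
Qed.

Lemma dual_vec (R : realType) (H : completeNormedModType R) (ip : H -> H -> R)
  (hip : is_inner_product ip) (xs : nat -> H) (A : R) (hA : 0 < A)
  (hlow : forall n (c : nat -> R), A * \sum_(j < n) c j ^+ 2 <= `|\sum_(j < n) c j *: xs j| ^+ 2)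
  (k : nat) :
  exists w : H, [/\ A <= `|w| ^+ 2, ip w (xs k) = `|w| ^+ 2 &
                   forall j, j != k -> ip w (xs j) = 0].
Proof.
set S := [set r : R | exists u, Dk xs k u /\ r = `|xs k - u| ^+ 2]%classic.
have hS0 : S (`|xs k| ^+ 2) by exists 0; rewrite subr0; split => //; apply: Dk0.
have hSlb : lbound S A by move=> r [u [hu ->]]; apply: (Dk_low hlow hA hu).
have hinf : has_inf S by split; [exists (`|xs k| ^+ 2) | exists A].
set d := inf S.
have hdA : A <= d by apply: lb_le_inf => //; exists (`|xs k| ^+ 2).
have hdle : forall u, Dk xs k u -> d <= `|xs k - u| ^+ 2.
  by move=> u hu; apply: ge_inf; [exists A | exists u].
have hseq : forall m : nat, {u : H | Dk xs k u /\ `|xs k - u| ^+ 2 < d + m.+1%:R^-1}.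
  move=> m; apply: cid.
  have hm : 0 < m.+1%:R^-1 :> R by rewrite invr_gt0.
  have [r [u [hu ->]] hr] := @inf_adherent _ S (m.+1%:R^-1) hm hinf.
  by exists u.
set u := fun m => proj1_sig (hseq m).
have hu : forall m, Dk xs k (u m) by move=> m; exact: (proj2_sig (hseq m)).1.
have hu2 : forall m, `|xs k - u m| ^+ 2 < d + m.+1%:R^-1.
  by move=> m; exact: (proj2_sig (hseq m)).2.
have hpar : forall m n, `|u m - u n| ^+ 2 <= 2 * m.+1%:R^-1 + 2 * n.+1%:R^-1.
  move=> m n.
  set a := xs k - u m; set b := xs k - u n.
  have hab : `|u m - u n| = `|a - b|.
    have -> : a - b = u n - u m by rewrite /a /b opprB addrC -addrA addKr.
    by rewrite distrC.
  set mid := 2^-1 *: u m + 2^-1 *: u n.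
  have hmid : Dk xs k mid by apply: Dk_lin.
  have h2 : (2 : R) != 0 by rewrite pnatr_eq0.
  have habm : a + b = 2 *: (xs k - mid).
    rewrite scalerBr scalerDr !scalerA mulfV // !scale1r scaler_nat mulr2n.
    by rewrite /a /b opprD addrACA.
  have h4 : `|a + b| ^+ 2 = 4 * `|xs k - mid| ^+ 2.
    rewrite habm normrZ exprMn ger0_norm //; lra.
  have := hdle _ hmid.
  have := normB2 hip a b; have := normD2 hip a b.
  have := hu2 m; have := hu2 n.
  rewrite hab -/a -/b h4.
  set em := m.+1%:R^-1; set en := n.+1%:R^-1.
  move=> g1 g2 g3 g4 g5; lra.
have hcv : cvg (u @ \oo)%classic.
  apply/cauchy_cvgP; apply: cauchy_exP => eps heps.
  have he4 : 0 < eps ^+ 2 / 4 by rewrite divr_gt0 // exprn_gt0.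
  have [N _ HN] := near_infty_natSinv_lt (PosNum he4).
  have hN := HN N (leqnn N); rewrite /= in hN.
  exists (u N); exists N => // n /= hn.
  rewrite -ball_normE /ball_ /=.
  have hle : n.+1%:R^-1 <= N.+1%:R^-1 :> R.
    by rewrite lef_pV2 ?posrE ?ltr0Sn // ler_nat ltnS.
  have := hpar N n.
  set em := N.+1%:R^-1 in hN hle *; set en := n.+1%:R^-1 in hle *.
  move=> g; rewrite ltNge; apply/negP => g2.
  have h0 : 0 <= `|u N - u n| by [].
  have : eps ^+ 2 <= `|u N - u n| ^+ 2 by nra.
  lra.
set p := lim (u @ \oo)%classic.
have hp : forall eta, 0 < eta -> \forall n \near \oo%classic, `|p - u n| < eta.
  by move=> eta heta; apply: cvgr_dist_lt.
set w := xs k - p.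
have hd0 : 0 <= d by lra.
have hw1 : `|w| ^+ 2 <= d.
  apply: RL3 => // eta heta.
  have [N _ HN] := filterI (hp eta heta) (near_infty_natSinv_lt (PosNum heta)).
  have [h1 h2] := HN N (leqnn N).
  exists `|xs k - u N|; split => //.
    have := ler_distD (u N) (xs k) p; rewrite -/w (distrC (u N) p); lra.
  have := hu2 N; rewrite /= in h2; set eN := N.+1%:R^-1 in h2 *; lra.
have hP2 : forall v, Dk xs k v -> forall s : R, d <= `|w - s *: v| ^+ 2.
  move=> v hv s; apply: RL2 => // eta heta.
  have [N _ HN] := hp eta heta; have hN := HN N (leqnn N); rewrite /= in hN.
  have hD : Dk xs k (1 *: u N + s *: v) by apply: Dk_lin.
  have := hdle _ hD; rewrite scale1r.
  have ht : `|xs k - (u N + s *: v)| <= `|w - s *: v| + eta.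
    have := ler_distD p (xs k - s *: v) (u N).
    have -> : xs k - s *: v - p = w - s *: v by rewrite /w addrAC.
    have -> : xs k - s *: v - u N = xs k - (u N + s *: v) by rewrite opprD addrA addrAC.
    lra.
  have h0 : 0 <= `|xs k - (u N + s *: v)| by [].
  nra.
have hP3 : forall v, Dk xs k v -> ip w v = 0.
  move=> v hv; apply: (RL1 hip) => s; exact: le_trans hw1 (hP2 v hv s).
have hP4 : ip w p = 0.
  apply/eqP; rewrite -normr_le0; apply/ler_addgt0Pr => e he; rewrite add0r.
  have hw0 : 0 < `|w| + 1 by rewrite ltr_pwDr.
  set eta := e / (`|w| + 1).
  have heta : 0 < eta by rewrite divr_gt0.
  have hetae : eta * (`|w| + 1) = e by rewrite /eta divfK // gt_eqF.
  have [N _ HN] := hp eta heta; have hN := HN N (leqnn N); rewrite /= in hN.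
  have -> : ip w p = ip w (p - u N) by rewrite (ipBr hip) (hP3 _ (hu N)) subr0.
  have := cauchy_schwarz hip w (p - u N).
  have h0 : 0 <= `|w| by [].
  nra.
exists w; split.
- apply: le_trans hdA _; have := hP2 0 (Dk0 xs k) 0; by rewrite scale0r subr0.
- have -> : xs k = w + p by rewrite /w subrK.
  by rewrite (ipDr hip) hP4 addr0 (ipn hip).
- by move=> j hjk; apply: hP3; apply: Dkx.
Qed.

Lemma small_coef (R : realType) (H : normedModType R) (ip : H -> H -> R)
  (hip : is_inner_product ip) (xs : nat -> H) (B : R) (hB : 0 < B)
  (hup : forall n (c : nat -> R), `|\sum_(j < n) c j *: xs j| ^+ 2 <= B * \sum_(j < n) c j ^+ 2)
  (x : H) (hinf : forall N, exists j, (N <= j)%N /\ ip x (xs j) <> 0)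
  (eta : R) (heta : 0 < eta) (M : nat) :
  exists k, [/\ (M <= k)%N, ip x (xs k) <> 0 & `|ip x (xs k)| < eta].
Proof.
apply: contrapT => hno.
have hbig : forall k, (M <= k)%N -> ip x (xs k) <> 0 -> eta <= `|ip x (xs k)|.
  move=> k hk hk0; rewrite leNgt; apply/negP => hlt; apply: hno; by exists k.
set S := fun n => \sum_(j < n) ip x (xs j) ^+ 2.
have hS : S = series (fun j => ip x (xs j) ^+ 2).
  by apply: funext => n; rewrite /S /series /= big_mkord.
have hnd : {homo S : n m / (n <= m)%N >-> n <= m}.
  by rewrite hS; apply: nondecreasing_series => k _ _; apply: sqr_ge0.
have hcount : forall m : nat, exists n, m%:R * eta ^+ 2 <= S n.
  elim=> [|m [n hn]]; first by exists 0%N; rewrite mul0r /S big_ord0.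
  have [j [hj hj0]] := hinf (maxn n M).
  exists j.+1; rewrite /S big_ord_recr /= -/(S j).
  have h1 : S n <= S j by apply: hnd; apply: leq_trans hj; apply: leq_maxl.
  have h2 : eta <= `|ip x (xs j)| by apply: hbig => //; apply: leq_trans hj; apply: leq_maxr.
  have h3 : eta ^+ 2 <= ip x (xs j) ^+ 2.
    by rewrite -(real_normK (num_real (ip x (xs j)))) ler_pXn2r // ?nnegrE ltW.
  rewrite -addn1 natrD mulrDl mul1r; lra.
set K := B * `|x| ^+ 2.
have hK0 : 0 <= K by rewrite /K mulr_ge0 ?sqr_ge0 ?ltW.
have hK1 : 0 < K + 1 by lra.
have hK : 0 < eta ^+ 2 / (K + 1) by rewrite divr_gt0 ?exprn_gt0.
have [N _ HN] := near_infty_natSinv_lt (PosNum hK).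
have hN := HN N (leqnn N); rewrite /= in hN.
have [n hn] := hcount N.+1.
have hb : S n <= K by apply: (bessel hip hB hup).
set q : R := N.+1%:R in hN hn.
have hq0 : 0 < q by rewrite /q ltr0Sn.
have hq : q * q^-1 = 1 by rewrite mulfV // gt_eqF.
clear HN.
set E := eta ^+ 2 / (K + 1) in hN hK.
have hE : E * (K + 1) = eta ^+ 2 by rewrite /E divfK // gt_eqF.
have h1 : 1 < q * E by rewrite -hq ltr_pM2l.
have h3 : 0 < (q * E - 1) * (K + 1) by rewrite mulr_gt0 // subr_gt0.
have h2 : K + 1 < q * eta ^+ 2 by rewrite -hE; nra.
lra.
Qed.

Lemma forward (R : realType) (H : completeNormedModType R)
  (ip : H -> H -> R) (hip : is_inner_product ip)
  (xs : nat -> H) (hxs : riesz_basis xs) (x : H) :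
  stable_pr_near ip xs x ->
  exists N : nat, forall j : nat, (N <= j)%N -> ip x (xs j) = 0.
Proof.
move=> [C [hC hst]].
apply: contrapT => hnot.
have hinf : forall N, exists j, (N <= j)%N /\ ip x (xs j) <> 0.
  move=> N; apply: contrapT => h; apply: hnot; exists N => j hj.
  by apply: contrapT => hj2; apply: h; exists j.
case: hxs => hden [A [B [hA hB hAB]]].
have hup n c := (hAB n c).2.
have hlow n c := (hAB n c).1.
have h12 : (0 : R) < 1 / 2 by rewrite divr_gt0.
have [d0 [hd0 hy]] := hst (1 / 2) h12.
set mA := Num.min 1 A.
have hmA : 0 < mA by rewrite lt_min ltr01 hA.
have [j0 [_ hj0]] := hinf 0%N.
have heta : 0 < d0 * mA / 2 by rewrite divr_gt0 ?mulr_gt0.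
have [k [hk hk0 hksmall]] := small_coef hip hB hup hinf heta j0.+1.
have hkj0 : j0 != k by rewrite neq_ltn hk.
have [w [hwA hwk hwj]] := dual_vec hip hA hlow k.
set a := ip x (xs k) in hk0 hksmall hwk.
have hw2 : 0 < `|w| ^+ 2 by lra.
have hw0 : 0 < `|w| by rewrite lt_def normr_ge0 andbT; apply/eqP => h; rewrite h expr0n /= in hw2; lra.
have hwm : mA <= `|w|.
  case: (lerP 1 `|w|) => h; first by rewrite ge_min h.
  rewrite ge_min; apply/orP; right; nra.
set t := 2 * a / `|w| ^+ 2.
set y := x - t *: w.
have hb : forall j, ip y (xs j) = (if j == k then - a else ip x (xs j)).
  move=> j; rewrite /y (ipBl hip) (ipZl hip).
  case: eqP => [->|/eqP hjk]; last by rewrite hwj // mulr0 subr0.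
  rewrite hwk /t -/a divfK ?gt_eqF //; lra.
have hterm : forall j, (`|ip x (xs j)| - `|ip y (xs j)|) ^+ 2 = 0.
  move=> j; rewrite hb; case: eqP => [->|_]; by rewrite ?normrN subrr expr0n.
have hyx : `|y - x| = 2 * `|a| / `|w|.
  rewrite /y addrAC subrr add0r normrN normrZ /t normrM normfV normrM.
  rewrite (ger0_norm (ltW hw2)) ger0_norm //.
  by field; rewrite gt_eqF.
have hyx2 : `|y - x| < d0.
  rewrite hyx ltr_pdivrMr //.
  have : `|a| * 2 < d0 * mA by move: hksmall; rewrite ltr_pdivlMr //.
  nra.
have hneq : y <> x.
  move=> e; move: hyx; rewrite e subrr normr0 => /esym/eqP.
  rewrite mulf_eq0 invr_eq0 (gt_eqF hw0) orbF mulf_eq0 normr_eq0 => /orP [|/eqP //].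
  by rewrite pnatr_eq0.
have hneqN : y <> - x.
  move=> e; apply: hj0.
  have := hb j0; rewrite e (ipNl hip) (negbTE hkj0) => h; lra.
have := hy y hyx2 hneq hneqN.
rewrite /Psi /abs_analysis_dist.
have -> : (fun n => \sum_(j < n) (`|ip x (xs j)| - `|ip y (xs j)|) ^+ 2) = (fun n => 0).
  by apply: funext => n; rewrite big1 // => j _; apply: hterm.
have hl : limn (fun n : nat => 0 : R) = 0 by apply: lim_cst.
rewrite hl sqrtr0 mul0r mulr0; lra.
Qed.

Unset Implicit Arguments.
Set Strict Implicit.

Theorem proposition5p1 (R : realType) (H : completeNormedModType R)
  (ip : H -> H -> R) (hip : is_inner_product ip)
  (hinf : infinite_dimensional H)
  (xs : nat -> H) (hxs : riesz_basis xs) (x : H) :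
  stable_pr_near ip xs x <->
  exists N : nat, forall j : nat, (N <= j)%N -> ip x (xs j) = 0.
Proof.
split; [exact: (forward hip hxs) | exact: (backward hip hxs)].
Qed.
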